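(* Let $n\in\mathbf{N}$ and $A\subset[n]$ have property P. Let $Z$ and $Z^{1(2)}_{(\frac29,\frac13]}$ be as defined in the context. Then for each $i\in\{1,3\}$, $$\left|Z^{1(2)}_{(\frac29,\frac13]}\right|+\left|A\cap\left(\tfrac{2n}{3},n\right]\cap(i+4\mathbf{Z})\right|\leqslant\frac{n}{12}+3.$$
   Context: A set $A\subset\mathbf{N}$ has property P if there are no $x,y,z\in A$ (not necessarily distinct $x,y$) with $z<x$, $z<y$ and $z\mid x+y$. Intervals denote sets of integers. For $a\in A\cap[1,\frac n2]$ let $m_a\geqslant0$ be the unique integer with $3^{m_a}a\in(\frac n6,\frac n2]$. Define $Z=\{3^{m_a}a: a\in A\cap[1,\frac n2],\ 3^{m_a}a\in(\frac{2n}{9},\frac n2]\}\cup\{2\cdot3^{m_a}a: a\in A\cap[1,\frac n2],\ 3^{m_a}a\in(\frac n6,\frac{2n}{9}]\}\subset(\frac{2n}{9},\frac n2]$, and $Z^{1(2)}_{(\frac29,\frac13]}=Z\cap(\frac{2n}{9},\frac n3]\cap(1+2\mathbf{Z})$. *)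

(* Defs.v *)
From mathcomp Require Import all_boot all_order all_algebra.
Set Implicit Arguments. Unset Strict Implicit. Unset Printing Implicit Defensive.

Definition propP (A : pred nat) : Prop :=
  forall x y z, A x -> A y -> A z -> z < x -> z < y -> ~~ (z %| x + y).

(* m is the (unique) exponent with 3^m a in (n/6, n/2], i.e. n < 6*3^m*a and 2*3^m*a <= n. *)
Definition is_m (n a m : nat) : bool := (n < 6 * (3 ^ m * a)) && (2 * (3 ^ m * a) <= n).

(* z \in Z : z = 3^{m_a} a with 3^{m_a} a in (2n/9, n/2], or z = 2*3^{m_a} a with
   3^{m_a} a in (n/6, 2n/9], for some a in A /\ [1, n/2].
   The witnesses a and m are bounded by n (automatic: a <= n/2, 3^m <= n/2). *)
Definition inZ (A : pred nat) (n z : nat) : bool :=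
  [exists a : 'I_n.+1, [exists m : 'I_n.+1,
     [&& A a, 1 <= a, 2 * a <= n, is_m n a m &
      ((2 * n < 9 * (3 ^ m * a)) && (z == 3 ^ m * a))
      || ((9 * (3 ^ m * a) <= 2 * n) && (z == 2 * (3 ^ m * a)))]]].

(* |Z^{1(2)}_{(2/9,1/3]}| = |Z /\ (2n/9, n/3] /\ (1 + 2Z)| ; Z lies in [0, n]. *)
Definition cardZ_odd (A : pred nat) (n : nat) : nat :=
  #|[set z : 'I_n.+1 | [&& inZ A n z, 2 * n < 9 * z, 3 * z <= n & odd z]]|.

Definition cardA_top (A : pred nat) (n i : nat) : nat :=
  #|[set x : 'I_n.+1 | [&& A x, 2 * n < 3 * x & x %% 4 == i %% 4]]|.

(* Main.v *)
Require Import Defs.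
From mathcomp Require Import all_boot all_order all_algebra.
From mathcomp Require Import zify lra.
Import Order.TTheory GRing.Theory Num.Theory.

Definition fimg (A : pred nat) (i u : nat) : nat :=
  if u %% 4 == i %% 4 then u else if A (u + 2) then u - 2 else u + 2.

Lemma Z_div (A : pred nat) n (z : nat) : inZ A n z -> odd z ->
  exists a, [/\ A a, 1 <= a, a <= z & a %| z].
Proof.
case/existsP => a /existsP [m /and5P [Aa a1 _ _ H]].
case/orP: H => /andP [_ /eqP ->] Hodd.
- exists a; split => //; last by apply: dvdn_mull.
  by apply: leq_pmull; rewrite expn_gt0.
- by rewrite oddM in Hodd.
Qed.

Lemma Z_facts (A : pred nat) n z (hA : forall x, A x -> 1 <= x <= n) (hP : propP A) :
  inZ A n z -> odd z -> 2 * n < 9 * z -> 3 * z <= n ->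
  ~~ A (3 * z) /\ ~~ (A (3 * z - 2) && A (3 * z + 2)).
Proof.
move=> hz oz h1 h2; have [a [Aa a1 az adz]] := Z_div _ _ _ hz oz.
have d6 : a %| 6 * z by apply: dvdn_mull.
split.
- apply/negP => H3.
  have := hP _ _ _ H3 H3 Aa; rewrite -mulnDl /=.
  have -> : 3 + 3 = 6 by []. move=> H; move: (H ltac:(lia) ltac:(lia)).
  by rewrite d6.
- apply/negP => /andP [Hm Hp].
  have := hA _ Hp => /andP [_ hp].
  have z3 : 3 <= z by case: z oz hz h1 h2 az adz hp {Hm Hp d6} => [|[|[|z]]] //= *; lia.
  have := hP _ _ _ Hm Hp Aa.
  have -> : 3 * z - 2 + (3 * z + 2) = 6 * z by lia.
  rewrite d6 => H; have := H ltac:(lia) ltac:(lia); done.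
Qed.

Lemma key (n : nat) (A : pred nat)
  (hA : forall x, A x -> 1 <= x <= n) (hP : propP A) (i : nat) (hi : (i == 1) || (i == 3)) :
  12 * (cardZ_odd A n + cardA_top A n i) <= n + 36.
Proof.
rewrite /cardZ_odd /cardA_top.
set ZS := [set z : 'I_n.+1 | _].
set SA := [set x : 'I_n.+1 | _].
have hZ : forall z : 'I_n.+1, z \in ZS ->
   [/\ 2 * n < 9 * z, 3 * z <= n, odd z, ~~ A (3 * z) & ~~ (A (3 * z - 2) && A (3 * z + 2))].
  move=> z; rewrite inE => /and4P [iz h1 h2 oz].
  by have [? ?] := Z_facts A n z hA hP iz oz h1 h2.
have hF : forall z : 'I_n.+1, z \in ZS ->
   [/\ fimg A i (3 * z) <= n.+2, 2 * n < 3 * fimg A i (3 * z) + 6,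
       fimg A i (3 * z) %% 4 == i %% 4 & ~~ A (fimg A i (3 * z))].
  move=> z /hZ [h1 h2 oz nA nA2].
  have z1 : 1 <= z by case: (nat_of_ord z) oz.
  have oz' : z %% 2 = 1 by rewrite modn2 oz.
  rewrite /fimg; case: ifP => [/eqP e|/negbT ne].
    split => //; [lia | lia | by rewrite e].
  case: ifP => hp.
    split; [lia | lia | | ].
      move: hi ne => /orP [] /eqP -> /eqP ne; apply/eqP; lia.
    by apply/negP => hm; move: nA2; rewrite hm hp.
  split; [lia | lia | | by rewrite hp].
  move: hi ne => /orP [] /eqP -> /eqP ne; apply/eqP; lia.
pose g := fun z : 'I_n.+1 => (inord (fimg A i (3 * z)) : 'I_n.+3).
pose h := fun x : 'I_n.+1 => (inord x : 'I_n.+3).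
have gv : forall z, z \in ZS -> nat_of_ord (g z) = fimg A i (3 * z).
  by move=> z /hF [b _ _ _]; rewrite /g inordK.
have hv : forall x : 'I_n.+1, nat_of_ord (h x) = x.
  by move=> x; rewrite /h inordK //; have := ltn_ord x; lia.
have ginj : {in ZS &, injective g}.
  move=> z z' hz hz' e; have := congr1 val e; rewrite /= gv // gv // => {e}.
  have [_ _ oz _ _] := hZ _ hz; have [_ _ oz' _ _] := hZ _ hz'.
  have z1 : 1 <= z by case: (nat_of_ord z) oz.
  have z1' : 1 <= z' by case: (nat_of_ord z') oz'.
  move=> e; apply/val_inj => /=; move: e; rewrite /fimg.
  repeat (case: ifP => _); lia.
have hinj : injective h by move=> x x' e; apply/val_inj; have := congr1 val e; rewrite /= !hv.
set C := [set y : 'I_n.+3 | (2 * n < 3 * y + 6) && (y %% 4 == i %% 4)].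
have sub : (g @: ZS) :|: (h @: SA) \subset C.
  apply/subsetP => y; rewrite inE => /orP [] /imsetP [x hx ->]; rewrite inE.
    by rewrite gv //; have [_ -> -> _] := hF _ hx.
  by rewrite hv; move: hx; rewrite inE => /and3P [_ h1 ->]; rewrite andbT; lia.
have dis : (g @: ZS) :&: (h @: SA) = set0.
  apply/setP => y; rewrite !inE; apply/negP => /andP [/imsetP [z hz ->] /imsetP [x hx e]].
  have := congr1 val e; rewrite /= gv // hv => e'.
  have [_ _ _ nA] := hF _ hz; move: hx; rewrite inE => /and3P [Ax _ _].
  by move: nA; rewrite e' Ax.
have c1 : #|ZS| + #|SA| <= #|C|.
  rewrite -(card_in_imset ginj) -(card_imset _ hinj) -cardsUI dis cards0 addn0.
  exact: subset_leq_card.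
pose p := fun y : 'I_n.+3 => (inord ((n + 2) %/ 4 - y %/ 4) : 'I_((n + 20) %/ 12).+1).
have pv : forall y, y \in C -> nat_of_ord (p y) = (n + 2) %/ 4 - y %/ 4.
  move=> y; rewrite inE => /andP [h1 _]; rewrite /p inordK //.
  have := ltn_ord y; lia.
have pinj : {in C &, injective p}.
  move=> y y' hy hy' e; have := congr1 val e; rewrite /= pv // pv // => e'.
  move: hy hy'; rewrite !inE => /andP [_ /eqP m1] /andP [_ /eqP m2].
  have := ltn_ord y; have := ltn_ord y'; move=> l1 l2.
  apply/val_inj => /=; lia.
have c2 : #|C| <= ((n + 20) %/ 12).+1.
  by rewrite -(card_in_imset pinj); apply: leq_trans (max_card _) _; rewrite card_ord.
lia.
Qed.

Theorem mainTheorem15 (n : nat) (A : pred nat)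
  (hA : forall x, A x -> 1 <= x <= n) (hP : propP A) (i : nat) (hi : (i == 1) || (i == 3)) :
  (((cardZ_odd A n + cardA_top A n i)%:R : rat) <= n%:R / 12%:R + 3%:R)%R.
Proof.
have k := key n A hA hP i hi.
set c := cardZ_odd A n + cardA_top A n i in k *.
have : ((12 * c)%:R <= (n + 36)%:R :> rat)%R by rewrite ler_nat.
rewrite natrM natrD => H.
have -> : (n%:R / 12%:R + 3%:R = (n%:R + 36%:R) / 12%:R :> rat)%R.
  by rewrite mulrDl -[(36%:R / 12%:R)%R]/(3%:R : rat).
lra.
Qed.
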